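(* Let $Q$ be a Moufang loop and $X$ a $2$-divisible normal subloop of $Q$ that is a commutative group. Then every inner mapping of $Q$ restricts to an automorphism of $X$.
   Context: A loop is a magma with identity $1$ in which the left translations $L_x(y)=xy$ and right translations $R_x(y)=yx$ are bijections; it is Moufang if it satisfies $xy\cdot zx=(x\cdot yz)x$. A subloop is normal if it is the kernel of a homomorphism. The inner mapping group $\mathrm{Inn}(Q)$ is the stabilizer of $1$ in the permutation group generated by all $L_x,R_x$; its elements are inner mappings. $X$ is $2$-divisible if $x\mapsto x^2$ is surjective on $X$. *)

(* Defs.v *)
From mathcomp Require Import ssreflect ssrfun ssrbool.

Set Implicit Arguments.
Unset Strict Implicit.
Unset Printing Implicit Defensive.

Section Loops.
Variables (T : Type) (mul : T -> T -> T) (one : T).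

Definition Ltr (x : T) : T -> T := fun y => mul x y.
Definition Rtr (x : T) : T -> T := fun y => mul y x.

Definition is_loop : Prop :=
  [/\ forall x, mul one x = x,
      forall x, mul x one = x,
      forall x, bijective (Ltr x)
    & forall x, bijective (Rtr x)].

Definition moufang : Prop :=
  forall x y z, mul (mul x y) (mul z x) = mul (mul x (mul y z)) x.

(* The multiplication group Mlt(Q): the permutation group generated by all
   L_x and R_x, i.e. all finite composites of translations and their inverses. *)
Inductive in_Mlt : (T -> T) -> Prop :=
| Mlt_id : in_Mlt id
| Mlt_L x f : in_Mlt f -> in_Mlt (Ltr x \o f)
| Mlt_R x f : in_Mlt f -> in_Mlt (Rtr x \o f)
| Mlt_Linv x g f : cancel (Ltr x) g -> cancel g (Ltr x) ->
                   in_Mlt f -> in_Mlt (g \o f)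
| Mlt_Rinv x g f : cancel (Rtr x) g -> cancel g (Rtr x) ->
                   in_Mlt f -> in_Mlt (g \o f).

Definition inner_mapping (f : T -> T) : Prop := in_Mlt f /\ f one = one.

Definition loop_hom (T' : Type) (mul' : T' -> T' -> T') (h : T -> T') : Prop :=
  forall x y, h (mul x y) = mul' (h x) (h y).

Definition commutative_group_on (X : T -> Prop) : Prop :=
  (forall x y z, X x -> X y -> X z -> mul (mul x y) z = mul x (mul y z)) /\
  (forall x y, X x -> X y -> mul x y = mul y x).

Definition two_divisible (X : T -> Prop) : Prop :=
  forall x, X x -> exists y, X y /\ mul y y = x.

Definition restricts_to_aut (X : T -> Prop) (f : T -> T) : Prop :=
  [/\ forall x, X x -> X (f x),
      forall x y, X x -> X y -> f x = f y -> x = y,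
      forall y, X y -> exists x, X x /\ f x = y
    & forall x y, X x -> X y -> f (mul x y) = mul (f x) (f y)].

End Loops.

Definition normal_subloop (T : Type) (mul : T -> T -> T) (X : T -> Prop) : Prop :=
  exists (T' : Type) (mul' : T' -> T' -> T') (one' : T') (h : T -> T'),
    is_loop mul' one' /\ loop_hom mul mul' h /\
    forall x, X x <-> h x = one'.

(* Main.v *)
Require Import Defs.
From mathcomp Require Import ssreflect ssrfun ssrbool.

Theorem lemma4p2 (T : Type) (mul : T -> T -> T) (one : T) (X : T -> Prop) :
  is_loop mul one -> moufang mul ->
  normal_subloop mul X -> commutative_group_on mul X -> two_divisible mul X ->
  forall f : T -> T, inner_mapping mul one f -> restricts_to_aut mul X f.
Proof.
move=> [m1x mx1 Lb Rb] M NS [assoc comm] div f [Hf f1].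
have lcan : forall x y z, mul x y = mul x z -> y = z.
  move=> x y z E; case: (Lb x) => g gK _.
  by rewrite -(gK y) -(gK z) /Ltr E.
have rcan : forall x y z, mul y x = mul z x -> y = z.
  move=> x y z E; case: (Rb x) => g gK _.
  by rewrite -(gK y) -(gK z) /Rtr E.
have lsol : forall x a, exists y, mul x y = a.
  move=> x a; case: (Lb x) => g _ Kg; exists (g a); exact: (Kg a).
have rsol : forall x a, exists y, mul y x = a.
  move=> x a; case: (Rb x) => g _ Kg; exists (g a); exact: (Kg a).
have flex : forall x z, mul x (mul z x) = mul (mul x z) x.
  by move=> x z; have := M x one z; rewrite mx1 m1x.
have invP : forall x xi, mul x xi = one ->
   [/\ mul xi x = one, (forall z, mul x (mul xi z) = z),
       (forall z, mul xi (mul x z) = z), (forall z, mul (mul z xi) x = z)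
     & (forall z, mul (mul z x) xi = z)].
  move=> x r Hr.
  have LL : forall z, mul x (mul r z) = z.
    move=> z; have := M x r z; rewrite Hr m1x => E.
    by apply: (rcan x); rewrite -E.
  have rx : mul r x = one by apply: (lcan x); rewrite LL mx1.
  have RIP1 : forall z, mul (mul z r) x = z.
    move=> z; have := M x z r; rewrite rx mx1 -flex => E.
    by apply: (lcan x); rewrite -E.
  split => // z.
  - by apply: (lcan x); rewrite LL.
  - by apply: (rcan x); rewrite RIP1.
have invE : forall x, exists xi, mul x xi = one by move=> x; exact: lsol.
have anti : forall b x bi xi ui, mul b bi = one -> mul x xi = one ->
    mul (mul b x) ui = one -> ui = mul xi bi.
  move=> b x bi xi ui Hb Hx Hu.
  have [_ _ _ _ Rb'] := invP b bi Hb.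
  have [_ _ _ _ Rx'] := invP x xi Hx.
  have [_ _ Lu _ _] := invP (mul b x) ui Hu.
  have E : mul ui b = xi by rewrite -{1}(Rx' b) Lu.
  by rewrite -E Rb'.
have aut2 : forall x xi, mul x xi = one -> forall c d,
    mul (mul (mul x c) x) (mul xi d) = mul x (mul c d).
  move=> x xi Hx c d.
  have [di Hd] := invE d.
  have [_ _ _ _ Rd] := invP d di Hd.
  have [dix _ _ _ _] := invP d di Hd.
  have [wi Hw] := invE (mul di x).
  have E1 := anti di x d xi wi dix Hx Hw.
  have [_ _ _ _ Rw] := invP (mul di x) wi Hw.
  have := M x (mul c d) di; rewrite Rd => E.
  by rewrite -E1 -E Rw.
have lmouf : forall x c e, mul x (mul c (mul x e)) = mul (mul (mul x c) x) e.
  move=> x c e; have [xi Hx] := invE x.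
  have [_ _ LIP _ _] := invP x xi Hx.
  by rewrite -(aut2 x xi Hx) LIP.
have raut : forall x xi, mul x xi = one -> forall a b,
    mul (mul a x) (mul xi (mul b xi)) = mul (mul a b) xi.
  move=> x xi Hx a b.
  have [_ LL _ _ _] := invP x xi Hx.
  have E := aut2 x xi Hx (mul xi a) (mul b xi).
  rewrite LL in E; rewrite E M -flex LL //.
have atpM : forall g, in_Mlt mul g -> exists beta gamma : T -> T,
    forall a b, mul (g a) (beta b) = gamma (mul a b).
  move=> g; elim => [|x f0 _ [be [ga H]]|x f0 _ [be [ga H]]
                     |x g0 f0 gK Kg _ [be [ga H]]|x g0 f0 gK Kg _ [be [ga H]]].
  - by exists id, id.
  - exists (fun b => mul (be b) x), (fun t => mul (mul x (ga t)) x) => a b /=.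
    by rewrite /Ltr M H.
  - have [xi Hx] := invE x.
    exists (fun b => mul xi (mul (be b) xi)), (fun t => mul (ga t) xi) => a b /=.
    by rewrite /Rtr raut // H.
  - have [xi Hx] := invE x.
    have [_ LL _ _ _] := invP x xi Hx.
    have gE : forall y, g0 y = mul xi y.
      by move=> y; apply: (lcan x); have := Kg y; rewrite /Ltr => ->; rewrite LL.
    exists (fun b => mul (be b) xi), (fun t => mul (mul xi (ga t)) xi) => a b /=.
    by rewrite gE M H.
  - have [xi Hx] := invE x.
    have [xix _ _ RIP1 _] := invP x xi Hx.
    have gE : forall y, g0 y = mul y xi.
      by move=> y; apply: (rcan x); have := Kg y; rewrite /Rtr => ->; rewrite RIP1.
    exists (fun b => mul x (mul (be b) x)), (fun t => mul (ga t) x) => a b /=.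
    by rewrite gE raut // H.
have [be [ga H]] := atpM f Hf.
pose c := be one.
have beE : forall b, be b = ga b by move=> b; have := H one b; rewrite f1 !m1x.
have gaE : forall a, ga a = mul (f a) c by move=> a; have := H a one; rewrite mx1.
have key : forall a b, mul (f a) (mul (f b) c) = mul (f (mul a b)) c.
  by move=> a b; rewrite -[mul (f (mul a b)) c]gaE -H beE gaE.
have semi : forall a b, f (mul a (mul b a)) = mul (mul (f a) (f b)) (f a).
  move=> a b; apply: (rcan c).
  by rewrite -key -key -lmouf.
case: NS => T' [mul' [one' [h [[m1' mx1' Lb' Rb'] [hh hX]]]]].
have lcan' : forall x y z, mul' x y = mul' x z -> y = z.
  move=> x y z E; case: (Lb' x) => g gK _.
  by rewrite -(gK y) -(gK z) /Ltr E.
have rcan' : forall x y z, mul' y x = mul' z x -> y = z.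
  move=> x y z E; case: (Rb' x) => g gK _.
  by rewrite -(gK y) -(gK z) /Rtr E.
have h1 : h one = one'.
  apply: (lcan' (h one)); rewrite -hh m1x mx1' //.
have invM : forall g, in_Mlt mul g -> forall y z, h y = h z <-> h (g y) = h (g z).
  move=> g; elim => [|x f0 _ IH|x f0 _ IH|x g0 f0 gK Kg _ IH|x g0 f0 gK Kg _ IH] y z /=.
  - by [].
  - apply: (iff_trans (IH y z)); rewrite /Ltr !hh; split; [by move=> ->| exact: lcan'].
  - apply: (iff_trans (IH y z)); rewrite /Rtr !hh; split; [by move=> ->| exact: rcan'].
  - apply: (iff_trans (IH y z)); split=> E.
      apply: (lcan' (h x)); rewrite -!hh.
      have := Kg (f0 y); have := Kg (f0 z); rewrite /Ltr => -> ->; exact: E.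
    have := Kg (f0 y); have := Kg (f0 z); rewrite /Ltr => Ez Ey.
    by rewrite -Ey -Ez !hh E.
  - apply: (iff_trans (IH y z)); split=> E.
      apply: (rcan' (h x)); rewrite -!hh.
      have := Kg (f0 y); have := Kg (f0 z); rewrite /Rtr => -> ->; exact: E.
    have := Kg (f0 y); have := Kg (f0 z); rewrite /Rtr => Ez Ey.
    by rewrite -Ey -Ez !hh E.
have surjM : forall g, in_Mlt mul g -> forall y, exists x, g x = y.
  move=> g; elim => [|x f0 _ IH|x f0 _ IH|x g0 f0 gK Kg _ IH|x g0 f0 gK Kg _ IH] y /=.
  - by exists y.
  - have [w Hw] := lsol x y; have [v Hv] := IH w; exists v; by rewrite Hv.
  - have [w Hw] := rsol x y; have [v Hv] := IH w; exists v; by rewrite Hv.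
  - have [v Hv] := IH (mul x y); exists v; rewrite Hv; exact: gK.
  - have [v Hv] := IH (mul y x); exists v; rewrite Hv; exact: gK.
have injM : forall g, in_Mlt mul g -> forall y z, g y = g z -> y = z.
  move=> g; elim => [|x f0 _ IH|x f0 _ IH|x g0 f0 gK Kg _ IH|x g0 f0 gK Kg _ IH] y z /= E.
  - by [].
  - by apply: IH; apply: (lcan x).
  - by apply: IH; apply: (rcan x).
  - by apply: IH; rewrite -(Kg (f0 y)) -(Kg (f0 z)) E.
  - by apply: IH; rewrite -(Kg (f0 y)) -(Kg (f0 z)) E.
have fX : forall x, X x -> X (f x).
  move=> x /hX Hx; apply/hX.
  have := (invM f Hf x one).1; rewrite Hx h1 f1 h1; exact.
split => //.
- by move=> x y _ _; apply: injM.
- move=> y Hy; have [x Hx] := surjM f Hf y; exists x; split => //.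
  apply/hX; rewrite -h1; apply/(invM f Hf); rewrite Hx f1 h1; exact/hX.
- move=> a b Ha Hb.
  have [x [Xx xx]] := div a Ha.
  have fxx : f (mul x x) = mul (f x) (f x).
    by have := semi x one; rewrite m1x f1 mx1.
  have fXx := fX x Xx; have fXb := fX b Hb.
  have E1 : mul x (mul b x) = mul (mul x x) b.
    by rewrite (comm b x) // assoc.
  have E2 : mul (mul (f x) (f b)) (f x) = mul (mul (f x) (f x)) (f b).
    by rewrite assoc // (comm (f b) (f x)) // -assoc.
  by rewrite -xx -E1 semi E2 -fxx.
Qed.
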